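(* Let $P=\{x\in\mathbb{R}^n: Ax\le b,\ 0\le x_i\le u_i \text{ for } i\in I\}$ be a rational polyhedron with $I=\{1,\dots,l\}$ and positive integers $u_i$. If $\mathcal{B}$ and $\mathcal{C}$ are two binarization schemes each defined by unimodular binarization polytopes, then \[\operatorname{proj}_x\big(\mathrm{SC}(P_{\mathcal{B}},I_{\mathcal{B}})\big)=\operatorname{proj}_x\big(\mathrm{SC}(P_{\mathcal{C}},I_{\mathcal{C}})\big).\]
   Context: For positive integers $q,u$, $\Gamma^q_u$ is the set of rational polytopes $B\subseteq\{(x,z)\in\mathbb{R}\times[0,1]^q:0\le x\le u\}$ with $\operatorname{proj}_x(B\cap(\mathbb{R}\times\{0,1\}^q))=\{0,1,\dots,u\}$. $B$ is perfect if for each $x\in\{0,\dots,u\}$ there is a unique $z\in\{0,1\}^q$ with $(x,z)\in B$, and $B=\mathrm{conv}(B\cap(\mathbb{R}\times\{0,1\}^q))$. A perfect $B\in\Gamma^u_u$, $B=\mathrm{conv}\{(j,w^j):j=0,\dots,u\}$ with $w^j\in\{0,1\}^u$, is unimodular if the matrix with columns $w^j-w^0$ ($j=1,\dots,u$) is integral with determinant $\pm1$. A binarization scheme defined by unimodular binarization polytopes is $\mathcal{B}=(B^1,\dots,B^l)$ with each $B^i\in\Gamma^{u_i}_{u_i}$ unimodular; with $q=\sum_iq_i$ ($q_i$ the number of new variables of $B^i$), $P_{\mathcal{B}}=\{(x,z)\in\mathbb{R}^n\times\mathbb{R}^q: x\in P,\ (x_i,z_i)\in B^i\text{ for } i\in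 I\}$, $z=(z_1,\dots,z_l)$, $z_i\in\mathbb{R}^{q_i}$, and $I_{\mathcal{B}}=\{1,\dots,l,n+1,\dots,n+q\}$. Split closure: for $J\subseteq\{1,\dots,N\}$ and $X\subseteq\mathbb{R}^N$, $\mathrm{SC}(X,J)=\bigcap\mathrm{conv}(X\setminus S)$ over all $S=\{y:\pi_0<\pi^Ty<\pi_0+1\}$ with $\pi\in\mathbb{Z}^N$, $\pi_j=0$ for $j\notin J$, $\pi_0\in\mathbb{Z}$. *)

(* Defs.v *)
From HB Require Import structures.
From mathcomp Require Import all_boot all_order all_algebra.
From mathcomp Require Import reals.
Set Implicit Arguments. Unset Strict Implicit. Unset Printing Implicit Defensive.
Import Order.TTheory GRing.Theory Num.Theory.
Local Open Scope ring_scope.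

Section Defs.
Variable R : realType.

Definition set_eq (T : Type) (X Y : T -> Prop) := forall y, X y <-> Y y.

(* the m-th coordinate (0-based) of a row vector, 0 if out of range *)
Definition coordnat N (v : 'rV[R]_N) (k : nat) : R :=
  if insub k is Some i then v 0 i else 0.

Definition conv N (X : 'rV[R]_N -> Prop) (y : 'rV[R]_N) : Prop :=
  exists (k : nat) (w : 'I_k -> R) (p : 'I_k -> 'rV[R]_N),
    (forall i, 0 <= w i) /\ \sum_(i < k) w i = 1 /\
    (forall i, X (p i)) /\ y = \sum_(i < k) w i *: p i.

Definition split_set N (pi : 'I_N -> int) (pi0 : int) (y : 'rV[R]_N) : Prop :=
  pi0%:~R < \sum_(j < N) (pi j)%:~R * y 0 j < pi0%:~R + 1.

Definition SC N (X : 'rV[R]_N -> Prop) (J : pred 'I_N) (y : 'rV[R]_N) : Prop :=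
  forall (pi : 'I_N -> int) (pi0 : int),
    (forall j, ~~ J j -> pi j = 0) ->
    conv (fun v => X v /\ ~ split_set pi pi0 v) y.

Definition proj_x n q (Y : 'rV[R]_(n + q) -> Prop) (x : 'rV[R]_n) : Prop :=
  exists z : 'rV[R]_q, Y (row_mx x z).

Definition binary q (z : 'rV[R]_q) : Prop := forall k, z 0 k = 0 \/ z 0 k = 1.

Definition rational_polytope N (B : 'rV[R]_N -> Prop) : Prop :=
  exists (k : nat) (p : 'I_k -> 'rV[rat]_N),
    set_eq B (conv (fun y => exists i, y = map_mx ratr (p i))).

Definition pt q (x : R) (z : 'rV[R]_q) : 'rV[R]_(1 + q) := row_mx x%:M z.

Definition in_Gamma (q u : nat) (B : 'rV[R]_(1 + q) -> Prop) : Prop :=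
  rational_polytope B /\
  (forall y, B y -> 0 <= lsubmx y 0 0 <= u%:R /\
                    forall k, 0 <= rsubmx y 0 k <= 1) /\
  (forall x : R, (exists z : 'rV[R]_q, binary z /\ B (pt x z)) <->
                 exists j : nat, (j <= u)%N /\ x = j%:R).

Definition perfect (q u : nat) (B : 'rV[R]_(1 + q) -> Prop) : Prop :=
  (forall j : nat, (j <= u)%N ->
     exists! z : 'rV[R]_q, binary z /\ B (pt j%:R z)) /\
  set_eq B (conv (fun y => B y /\ binary (rsubmx y))).

Definition unimodular (u : nat) (B : 'rV[R]_(1 + u) -> Prop) : Prop :=
  @in_Gamma u u B /\ @perfect u u B /\
  exists w : 'I_u.+1 -> 'rV[R]_u,
    (forall j, binary (w j)) /\
    set_eq B (conv (fun y => exists j : 'I_u.+1, y = pt (nat_of_ord j)%:R (w j))) /\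
    (let M := \matrix_(r < u, c < u) (w (lift ord0 c) 0 r - w ord0 0 r) in
     \det M = 1 \/ \det M = -1).

(* P = {x : A x <= b, 0 <= x_i <= u_i for i < l} (0-based indices) *)
Definition polyP m n l (A : 'M[rat]_(m, n)) (b : 'cV[rat]_m) (u : 'I_l -> nat)
  (x : 'rV[R]_n) : Prop :=
  (forall r : 'I_m, \sum_(j < n) ratr (A r j) * x 0 j <= ratr (b r 0)) /\
  (forall i : 'I_l, 0 <= coordnat x i <= (u i)%:R).

(* offset of block z_i inside z = (z_1, ..., z_l) *)
Definition offset l (u : 'I_l -> nat) (i : 'I_l) : nat :=
  (\sum_(k < l | (k < i)%N) u k)%N.

Definition block n l (u : 'I_l -> nat) (y : 'rV[R]_(n + \sum_(k < l) u k)) (i : 'I_l)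
  : 'rV[R]_(1 + u i) :=
  pt (coordnat (lsubmx y) i)
     (\row_(k < u i) coordnat (rsubmx y) (offset u i + k)).

(* P_B for a scheme B = (B^1, ..., B^l) with q_i = u_i *)
Definition PB m n l (A : 'M[rat]_(m, n)) (b : 'cV[rat]_m) (u : 'I_l -> nat)
  (Bs : forall i : 'I_l, 'rV[R]_(1 + u i) -> Prop)
  (y : 'rV[R]_(n + \sum_(k < l) u k)) : Prop :=
  polyP A b u (lsubmx y) /\ forall i : 'I_l, Bs i (block y i).

(* I_B = {1..l, n+1..n+q}, 0-based *)
Definition IB n l q : pred 'I_(n + q) := fun j => ((j < l)%N || (n <= j)%N).

End Defs.

(* Main.v *)
Require Import Defs.
From HB Require Import structures.
From mathcomp Require Import all_boot all_order all_algebra.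
From mathcomp Require Import reals.
From mathcomp Require Import lra.
From Stdlib Require Import ClassicalEpsilon.
Import Order.TTheory GRing.Theory Num.Theory.
Set Implicit Arguments. Unset Strict Implicit.
Local Open Scope ring_scope.

Section Aux.
Variable R : realType.

Lemma rowaff n q (a : 'rV[R]_n) (b : 'rV[R]_q) (M : 'M[R]_q) (t : 'rV[R]_q) :
  row_mx a b *m block_mx 1 0 0 M + row_mx 0 t = row_mx a (b *m M + t).
Proof.
by rewrite mul_row_block !mulmx0 mulmx1 add_row_mx !addr0 add0r.
Qed.

Lemma conv_affine N (X Y : 'rV[R]_N -> Prop) (F : 'M[R]_N) (c : 'rV[R]_N) y :
  conv X y -> (forall v, X v -> Y (v *m F + c)) -> conv Y (y *m F + c).
Proof.
move=> [k [w [p [w0 [w1 [Xp ->]]]]]] XY.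
exists k, w, (fun i => p i *m F + c); split=> //; split=> //.
 split; first by move=> i; apply: XY.
under [RHS]eq_bigr do rewrite scalerDr.
rewrite big_split /= -scaler_suml w1 scale1r mulmx_suml; congr (_ + _).
by apply: eq_bigr => i _; rewrite scalemxAl.
Qed.

Lemma mapB m n (A B : 'M[int]_(m, n)) :
  map_mx (intr : int -> R) (A - B) = map_mx intr A - map_mx intr B.
Proof. by apply/matrixP=> i j; rewrite !mxE intrB. Qed.
Lemma mapD m n (A B : 'M[int]_(m, n)) :
  map_mx (intr : int -> R) (A + B) = map_mx intr A + map_mx intr B.
Proof. by apply/matrixP=> i j; rewrite !mxE intrD. Qed.

Lemma mapM m n p (A : 'M[int]_(m, n)) (B : 'M[int]_(n, p)) :
  map_mx (intr : int -> R) (A *m B) = map_mx intr A *m map_mx intr B.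
Proof. exact: map_mxM. Qed.

Definition bz (x : R) : int := if x == 1 then 1 else 0.

Lemma bzE (x : R) : x = 0 \/ x = 1 -> x = (bz x)%:~R.
Proof. rewrite /bz; case=> ->; last by rewrite eqxx.
by rewrite eq_sym (negbTE (oner_neq0 R)).
Qed.


Lemma Wmat u (w : 'I_u.+1 -> 'rV[R]_u) : (forall j, binary (w j)) ->
  let Wz := \matrix_(c < u, r < u) (bz (w (lift ord0 c) 0 r) - bz (w ord0 0 r)) in
  map_mx intr Wz = (\matrix_(r < u, c < u) (w (lift ord0 c) 0 r - w ord0 0 r))^T.
Proof.
move=> hb Wz; apply/matrixP=> c r; rewrite !mxE intrB.
by rewrite -!bzE //; apply: hb.
Qed.

Lemma Wunit u (w : 'I_u.+1 -> 'rV[R]_u) : (forall j, binary (w j)) ->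
  let M := \matrix_(r < u, c < u) (w (lift ord0 c) 0 r - w ord0 0 r) in
  (\det M = 1 \/ \det M = -1) ->
  \matrix_(c < u, r < u) (bz (w (lift ord0 c) 0 r) - bz (w ord0 0 r)) \in unitmx.
Proof.
move=> hb M hd; set Wz := \matrix_(c < u, r < u) _.
have : (\det Wz)%:~R = \det M :> R.
  by rewrite -det_map_mx (Wmat hb) det_tr.
rewrite unitmxE; case: hd => -> h.
  by have -> : \det Wz = 1 by apply: (@intr_inj R); rewrite h.
by have -> : \det Wz = -1 by apply: (@intr_inj R); rewrite h intrN.
Qed.

Lemma local_ex u (B C : 'rV[R]_(1+u) -> Prop) : unimodular B -> unimodular C ->
 exists Mt : 'M[int]_u * 'rV[int]_u, forall x z, B (pt x z) ->
   C (pt x (z *m map_mx intr Mt.1 + map_mx intr Mt.2)).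
Proof.
move=> [_ [_ [w [wb [wB wd]]]]] [_ [_ [v [vb [vC vd]]]]].
have wU := Wunit wb wd.
have vM := Wmat vb; have wM := Wmat wb.
set Wz := \matrix_(c < u, r < u) (bz (w (lift ord0 c) 0 r) - bz (w ord0 0 r)) in wU wM.
set Vz := \matrix_(c < u, r < u) (bz (v (lift ord0 c) 0 r) - bz (v ord0 0 r)) in vM.
set w0z : 'rV[int]_u := \row_r bz (w ord0 0 r).
set v0z : 'rV[int]_u := \row_r bz (v ord0 0 r).
set Mz := invmx Wz *m Vz.
exists (Mz, v0z - w0z *m Mz) => x z /wB Hc; apply/vC.
have hw0 : map_mx intr w0z = w ord0.
  by apply/matrixP=> i r; rewrite !mxE ord1 -bzE //; apply: wb.
have hv0 : map_mx intr v0z = v ord0.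
  by apply/matrixP=> i r; rewrite !mxE ord1 -bzE //; apply: vb.
have key : forall j, w j *m map_mx intr Mz + map_mx intr (v0z - w0z *m Mz) = v j.
  move=> j; rewrite mapB (mapM w0z Mz) hw0 hv0 addrCA -mulmxBl.
  case: (unliftP ord0 j) => [c ->|->]; last by rewrite subrr mul0mx addr0.
  have -> : w (lift ord0 c) - w ord0 = row c (map_mx intr Wz).
    by apply/matrixP=> i r; rewrite wM !mxE ord1.
  rewrite -row_mul -mapM /Mz mulKVmx // vM.
  by apply/rowP=> r; rewrite !mxE addrC subrK.
have ->: pt x (z *m map_mx intr Mz + map_mx intr (v0z - w0z *m Mz)) =
  pt x z *m block_mx 1 0 0 (map_mx intr Mz) + row_mx 0 (map_mx intr (v0z - w0z *m Mz)).
  by rewrite /pt rowaff.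
apply: (conv_affine Hc) => y [j ->]; exists j.
by rewrite /pt rowaff key.
Qed.

Lemma sum_row N (a : 'rV[R]_N) (f : 'I_N -> int) :
  \sum_(j < N) (f j)%:~R * a 0 j = (a *m map_mx intr (\col_j f j)) 0 0.
Proof. by rewrite mxE; apply: eq_bigr => j _; rewrite !mxE mulrC. Qed.

Lemma SC_map N (X Y : 'rV[R]_N -> Prop) (J : pred 'I_N) (Fz : 'M[int]_N)
  (cz : 'rV[int]_N) y :
  (forall j, ~~ J j -> forall k, Fz j k = (j == k)%:R) ->
  (forall v, X v -> Y (v *m map_mx intr Fz + map_mx intr cz)) ->
  SC X J y -> SC Y J (y *m map_mx intr Fz + map_mx intr cz).
Proof.
move=> hF hXY hSC pi pi0 hpi.
set pz : 'cV[int]_N := \col_j pi j.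
set s := Fz *m pz.
set K : int := (cz *m pz) 0 0.
have hs : forall j, ~~ J j -> s j 0 = 0.
  move=> j hj; rewrite /s mxE (bigD1 j) //= big1 ?addr0.
    by rewrite hF // eqxx mul1r mxE hpi.
  by move=> k hk; rewrite hF // eq_sym (negbTE hk) mul0r.
have key : forall v : 'rV[R]_N, split_set pi pi0 (v *m map_mx intr Fz + map_mx intr cz) <->
    split_set (fun j => s j 0) (pi0 - K) v.
  move=> v; rewrite /split_set.
  have -> : \sum_(j < N) (pi j)%:~R * (v *m map_mx intr Fz + map_mx intr cz) 0 j
     = \sum_(j < N) (s j 0)%:~R * v 0 j + K%:~R.
    rewrite sum_row sum_row.
    have -> : \col_j s j 0 = s by apply/matrixP=> i j; rewrite mxE ord1.
    rewrite mulmxDl -mulmxA -mapM mxE.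
    by congr (_ + _); rewrite -mapM mxE.
  rewrite intrB; split=> /andP [h1 h2]; apply/andP; split; lra.
have hc0 := hSC (fun j : 'I_N => s j 0) (pi0 - K)%R hs.
apply: (conv_affine hc0) => v [hv hns]; split.
  exact: hXY.
by move/key.
Qed.


Lemma sum_delta (q : nat) (x : 'I_q) (f : 'I_q -> int) :
  \sum_(c < q) (((c : nat) == x)%:R * f c) = f x.
Proof.
rewrite (bigD1 x) //= eqxx mul1r big1 ?addr0 // => c hc.
by rewrite val_eqE (negbTE hc) mul0r.
Qed.

Lemma pick_sum N (z : 'rV[R]_N) (x : 'I_N) (f : 'I_N -> R) :
  (forall c, c != x -> f c = 0) -> f x = 1 -> \sum_c z 0 c * f c = z 0 x.
Proof.
move=> h0 h1; rewrite (bigD1 x) //= h1 mulr1 big1 ?addr0 // => c hc.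
by rewrite h0 // mulr0.
Qed.

Section Blocks.
Variables (l : nat) (u : 'I_l -> nat).
Local Notation q := (\sum_(k < l) u k)%N.

Lemma off_lt (i j : 'I_l) : (i < j)%N -> (offset u i + u i <= offset u j)%N.
Proof.
move=> ij; rewrite /offset.
rewrite [X in (_ <= X)%N](bigID (fun k : 'I_l => (k <= i)%N)) /=.
apply: (leq_trans _ (leq_addr _ _)).
rewrite [X in (_ <= X)%N](bigD1 i) /=; last by rewrite ij leqnn.
rewrite addnC leq_add2l.
rewrite [X in (_ <= X)%N](eq_bigl (fun k : 'I_l => (k < i)%N)) //.
move=> k /=; case: (ltngtP k i) => h.
- by rewrite (ltn_trans h ij) -val_eqE /= (ltn_eqF h).
- by rewrite andbF.
- by rewrite -val_eqE /= h eqxx /= andbF.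
Qed.

Lemma off_q (i : 'I_l) : (offset u i + u i <= q)%N.
Proof.
rewrite /offset [X in (_ <= X)%N](bigD1 i) //= addnC leq_add2l.
rewrite [X in (_ <= X)%N](bigID (fun k : 'I_l => (k < i)%N)) /=.
rewrite [X in (_ <= X + _)%N](eq_bigl (fun k : 'I_l => (k < i)%N)) ?leq_addr //.
by move=> k /=; case: (ltngtP k i) => h; rewrite ?andbF // -val_eqE /= (ltn_eqF h).
Qed.

Lemma off_in (i : 'I_l) (a : 'I_(u i)) : (offset u i + a < q)%N.
Proof. by apply: leq_trans (off_q i); rewrite ltn_add2l. Qed.

Lemma off_disj (i j : 'I_l) (a : 'I_(u j)) (b : 'I_(u i)) :
  i != j -> (offset u j + a != offset u i + b)%N.
Proof.
move=> hij; case: (ltngtP i j) => h.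
- have := off_lt h; apply: contraTneq => e; rewrite -ltnNge.
  by apply: (leq_ltn_trans (leq_addr a _)); rewrite e ltn_add2l ltn_ord.
- have := off_lt h; apply: contraTneq => e; rewrite -ltnNge.
  by apply: (leq_ltn_trans (leq_addr b _)); rewrite -e ltn_add2l ltn_ord.
- by case/eqP: hij; apply: val_inj.
Qed.

Definition selT (i : 'I_l) : 'M[int]_(q, u i) :=
  \matrix_(c, a) (((c : nat) == offset u i + a)%N)%:R.

Lemma selE i c a : selT i c a = (((c : nat) == offset u i + a)%N)%:R.
Proof. by rewrite mxE. Qed.

Lemma selTT (i : 'I_l) : (selT i)^T *m selT i = 1.
Proof.
apply/matrixP=> a b; rewrite !mxE.
rewrite (eq_bigr (fun c : 'I_q => (((c : nat) == Ordinal (off_in a))%:R *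
    (((c : nat) == offset u i + b)%N)%:R))) ?sum_delta //=.
  by rewrite eqn_add2l.
by move=> c _; rewrite !mxE.
Qed.

Lemma selTn (i j : 'I_l) : i != j -> (selT j)^T *m selT i = 0.
Proof.
move=> hij; apply/matrixP=> a b; rewrite !mxE.
rewrite (eq_bigr (fun c : 'I_q => (((c : nat) == Ordinal (off_in a))%:R *
    (((c : nat) == offset u i + b)%N)%:R))) ?sum_delta //=.
  by rewrite (negbTE (off_disj a b hij)).
by move=> c _; rewrite !mxE.
Qed.

Lemma sel_row (z : 'rV[R]_q) (i : 'I_l) :
  z *m map_mx intr (selT i) = \row_a coordnat z (offset u i + a).
Proof.
apply/rowP=> a; rewrite !mxE /coordnat insubT /=; first exact: off_in.
move=> h.
have -> : Sub (offset u i + a)%N h = Ordinal h by apply: val_inj.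
apply: pick_sum => [c hc|]; rewrite mxE selE /=; last by rewrite eqxx.
by rewrite -(inj_eq val_inj) /= in hc; rewrite (negbTE hc).
Qed.

End Blocks.

Section Gmat.
Variables (l N : nat) (u : 'I_l -> nat) (S : forall i : 'I_l, 'M[int]_(N, u i)).
Hypothesis STT : forall i, (S i)^T *m S i = 1.
Hypothesis STn : forall i j, i != j -> (S j)^T *m S i = 0.
Variables (Mz : forall i, 'M[int]_(u i)) (tz : forall i, 'rV[int]_(u i)).

Definition Gz : 'M[int]_N := 1 + \sum_(i < l) S i *m (Mz i - 1) *m (S i)^T.
Definition gz : 'rV[int]_N := \sum_(i < l) tz i *m (S i)^T.

Lemma G_sel i : Gz *m S i = S i *m Mz i.
Proof.
rewrite /Gz mulmxDl mul1mx mulmx_suml (bigD1 i) //= big1 ?addr0.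
  by rewrite -mulmxA STT mulmx1 mulmxBr mulmx1 addrC subrK.
by move=> j hj; rewrite -mulmxA STn ?mulmx0 // eq_sym.
Qed.

Lemma g_sel i : gz *m S i = tz i.
Proof.
rewrite /gz mulmx_suml (bigD1 i) //= big1 ?addr0.
  by rewrite -mulmxA STT mulmx1.
by move=> j hj; rewrite -mulmxA STn ?mulmx0 // eq_sym.
Qed.
End Gmat.

Lemma dir m n l (A : 'M[rat]_(m, n)) (b : 'cV[rat]_m) (u : 'I_l -> nat)
  (Bs Cs : forall i : 'I_l, 'rV[R]_(1 + u i) -> Prop)
  (hB : forall i, unimodular (Bs i)) (hC : forall i, unimodular (Cs i)) x :
  proj_x (SC (PB A b Bs) (@IB n l (\sum_(k < l) u k))) x ->
  proj_x (SC (PB A b Cs) (@IB n l (\sum_(k < l) u k))) x.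
Proof.
move=> [z hz].
pose Mt i := proj1_sig (constructive_indefinite_description _ (local_ex (hB i) (hC i))).
have hMt i := proj2_sig (constructive_indefinite_description _ (local_ex (hB i) (hC i))).
pose G := Gz (fun i => selT u i) (fun i => (Mt i).1).
pose g := gz (fun i => selT u i) (fun i => (Mt i).2).
pose Fz : 'M[int]_(n + \sum_(k < l) u k) := block_mx 1 0 0 G.
pose cz : 'rV[int]_(n + \sum_(k < l) u k) := row_mx 0 g.
have hF : forall y : 'rV[R]_(n + \sum_(k < l) u k),
    y *m map_mx intr Fz + map_mx intr cz =
    row_mx (lsubmx y) (rsubmx y *m map_mx intr G + map_mx intr g).
  move=> y; rewrite map_block_mx map_row_mx map_mx1 !map_mx0.
  by rewrite -{1}(hsubmxK y) rowaff.
exists (z *m map_mx intr G + map_mx intr g).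
have := SC_map (X := PB A b Bs) (Y := PB A b Cs) (J := @IB n l (\sum_(k < l) u k))
  (Fz := Fz) (cz := cz) _ _ hz.
rewrite hF row_mxKl row_mxKr; apply.
- move=> j hj k.
  have jn : (j < n)%N by move: hj; rewrite /IB /=; case/norP => _ h; rewrite ltnNge.
  have -> : j = lshift (\sum_(k < l) u k) (Ordinal jn) by apply: val_inj.
  rewrite -[k]splitK; case: (split k) => k' /=.
    by rewrite block_mxEul mxE (inj_eq (@lshift_inj _ _)).
  by rewrite block_mxEur mxE eq_lrshift.
- move=> v [hP hBv]; rewrite hF; split; first by rewrite row_mxKl.
  move=> i; rewrite /block row_mxKl row_mxKr -sel_row mulmxDl -mulmxA -!mapM.
  rewrite G_sel ?g_sel; try (by apply: selTT); try (by move=> *; apply: selTn).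
  rewrite mapM mulmxA sel_row.
  exact: (proj2_sig (constructive_indefinite_description _ (local_ex (hB i) (hC i)))) _ _ (hBv i).
Qed.

End Aux.

Unset Implicit Arguments.

Theorem corollary2 (R : realType) (m n l : nat)
  (A : 'M[rat]_(m, n)) (b : 'cV[rat]_m) (u : 'I_l -> nat)
  (hl0 : (0 < l)%N) (hln : (l <= n)%N) (hu : forall i, (0 < u i)%N)
  (Bs Cs : forall i : 'I_l, 'rV[R]_(1 + u i) -> Prop)
  (hB : forall i, unimodular (Bs i)) (hC : forall i, unimodular (Cs i)) :
  set_eq
    (proj_x (SC (PB A b Bs) (@IB n l (\sum_(k < l) u k))))
    (proj_x (SC (PB A b Cs) (@IB n l (\sum_(k < l) u k)))).
Proof.
move=> x; split; [exact: (dir hB hC) | exact: (dir hC hB)].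
Qed.
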